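(* Let $n\ge 2$, let $\Omega$ be a compact subset of $\mathbb{R}^n$, let $\widetilde\Omega=\mathrm{conv}(\Omega)$, and let $v\in S^{n-1}$. Put $\widetilde\Omega^+_{v,b}=\widetilde\Omega\cap\{x\in\mathbb{R}^n : x\cdot v>b\}$. Then for every $z\in \widetilde\Omega^+_{v,l_\Omega(v)}$, the closed segment $\overline{zz'}$ with $z'=\mathrm{R}_{v,l_\Omega(v)}(z)$ is contained in $\widetilde\Omega$.
   Context: $\mathrm{conv}(\Omega)$ is the convex hull of $\Omega$; $S^{n-1}$ is the unit sphere in $\mathbb{R}^n$. For $X\subset\mathbb{R}^n$, $v\in S^{n-1}$ and $b\in\mathbb{R}$, put $X^+_{v,b}=X\cap\{x\in\mathbb{R}^n : x\cdot v>b\}$, and let $\mathrm{R}_{v,b}$ be the reflection of $\mathbb{R}^n$ in the hyperplane $\{x : x\cdot v=b\}$. For a bounded $X\subset\mathbb{R}^n$, $l_X(v)=\inf\{a : \mathrm{R}_{v,c}(X^+_{v,c})\subset X \text{ for every } c\ge a\}$. $\overline{xy}$ denotes the closed line segment joining $x$ and $y$. *)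

(* Defs.v *)
From HB Require Import structures.
From mathcomp Require Import all_boot all_order all_algebra.
From mathcomp Require Import all_classical all_reals all_analysis.
Set Implicit Arguments. Unset Strict Implicit. Unset Printing Implicit Defensive.
Import Order.TTheory GRing.Theory Num.Theory.
Import numFieldNormedType.Exports.
Local Open Scope classical_set_scope.
Local Open Scope ring_scope.

Section Defs.
Variables (R : realType) (n : nat).
Notation V := 'rV[R]_n.

Definition dotp (x v : V) : R := \sum_(i < n) x 0 i * v 0 i.

Definition unit_sphere : set V := [set v | dotp v v = 1].

Definition is_convex_set (C : set V) : Prop :=
  forall x y t, C x -> C y -> 0 <= t -> t <= 1 -> C (t *: x + (1 - t) *: y).
Definition convex_hull (X : set V) : set V :=
  [set x | forall C, is_convex_set C -> X `<=` C -> C x].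

Definition halfplus (X : set V) (v : V) (b : R) : set V :=
  X `&` [set x | dotp x v > b].

(* reflection in the hyperplane {x | x . v = b}, v a unit vector *)
Definition refl (v : V) (b : R) (x : V) : V := x - (2 * (dotp x v - b)) *: v.

Definition lX (X : set V) (v : V) : R :=
  inf [set a : R | forall c, a <= c -> refl v c @` halfplus X v c `<=` X].

Definition closed_segment (x y : V) : set V :=
  [set (1 - t) *: x + t *: y | t in `[0, 1]%classic].
End Defs.

(* Main.v *)
Require Import Defs.
From HB Require Import structures.
From mathcomp Require Import all_boot all_order all_algebra.
From mathcomp Require Import all_classical all_reals all_analysis.
From mathcomp Require Import ring lra.
Import Order.TTheory GRing.Theory Num.Theory.
Import numFieldNormedType.Exports.
Local Open Scope classical_set_scope.
Local Open Scope ring_scope.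

Section Aux.
Variables (R : realType) (n : nat).
Notation V := 'rV[R]_n.

Lemma dotpD (x y v : V) : dotp (x + y) v = dotp x v + dotp y v.
Proof. rewrite /dotp -big_split /=; apply: eq_bigr => i _; rewrite !mxE; ring. Qed.

Lemma dotpZ (a : R) (x v : V) : dotp (a *: x) v = a * dotp x v.
Proof. rewrite /dotp mulr_sumr; apply: eq_bigr => i _; rewrite !mxE; ring. Qed.

Lemma dotpN (x v : V) : dotp (- x) v = - dotp x v.
Proof. by rewrite -scaleN1r dotpZ mulN1r. Qed.

Lemma dotp_refl (v x : V) c : dotp v v = 1 -> dotp (refl v c x) v = 2 * c - dotp x v.
Proof. move=> h; rewrite /refl dotpD dotpN dotpZ h; ring. Qed.

Lemma dotp_comb (t : R) (x y v : V) :
  dotp (t *: x + (1 - t) *: y) v = t * dotp x v + (1 - t) * dotp y v.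
Proof. by rewrite dotpD !dotpZ. Qed.

Lemma refl_comb (v : V) c t (x y : V) :
  refl v c (t *: x + (1 - t) *: y) = t *: refl v c x + (1 - t) *: refl v c y.
Proof.
rewrite /refl dotp_comb; apply/rowP => j; rewrite !mxE; ring.
Qed.

Lemma coord_le_norm (x : V) i : `|x 0 i| <= `|x|.
Proof.
have -> : `|x| = mx_norm x by [].
rewrite mx_normrE; exact: (le_bigmax _ (fun ij : 'I_1 * 'I_n => `|x ij.1 ij.2|) (0,i)).
Qed.

Lemma dotp_bound (x v : V) : `|dotp x v| <= `|x| * \sum_(i < n) `|v 0 i|.
Proof.
rewrite /dotp mulr_sumr; apply: (le_trans (ler_norm_sum _ _ _)).
apply: ler_sum => i _; rewrite normrM; apply: ler_wpM2r => //; exact: coord_le_norm.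
Qed.


Lemma hull_convex (X : set V) : is_convex_set (convex_hull X).
Proof. move=> x y t hx hy t0 t1 C cC XC; apply: (cC) => //; [exact: (hx C cC XC)|exact: (hy C cC XC)]. Qed.

Lemma sub_hull (X : set V) : X `<=` convex_hull X.
Proof. by move=> x Xx C _ XC; apply: XC. Qed.

Lemma key (H : set V) (v : V) c : is_convex_set H -> dotp v v = 1 ->
  forall z1 z2 t, H z1 -> H (refl v c z1) -> H z2 -> c < dotp z1 v -> dotp z2 v <= c ->
  0 <= t -> t <= 1 -> c < dotp (t *: z1 + (1 - t) *: z2) v ->
  H (refl v c (t *: z1 + (1 - t) *: z2)).
Proof.
move=> cH vv z1 z2 t H1 Hr1 H2 c1 c2 t0 t1; rewrite dotp_comb => cz.
set a := dotp z1 v - c; set b := dotp z2 v - c.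
have a0 : 0 < a by rewrite /a subr_gt0.
have b0 : b <= 0 by rewrite /b subr_le0.
have tp : 0 < t.
  rewrite lt_neqAle t0 andbT; apply/eqP => t0'; move: cz; rewrite -t0' mul0r subr0 mul1r add0r.
  by move=> /(le_lt_trans c2); rewrite ltxx.
have pos : 0 < t * a + (1 - t) * b by rewrite /a /b; lra.
set q := (t * a + (1 - t) * b) / (t * a).
have ta0 : 0 < t * a by rewrite mulr_gt0.
have q0 : 0 <= q by rewrite /q divr_ge0 // ltW.
have q1 : q <= 1.
  rewrite /q ler_pdivrMr // mul1r; have : 0 <= 1 - t by lra.
  move=> h; rewrite -[X in _ <= X]addr0 lerD2l; exact: mulr_ge0_le0.
have Hw : H (q *: refl v c z1 + (1 - q) *: z1) by apply: cH.
have -> : refl v c (t *: z1 + (1 - t) *: z2) = t *: (q *: refl v c z1 + (1 - q) *: z1) + (1 - t) *: z2.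
  rewrite /refl dotp_comb; apply/rowP => j; rewrite !mxE.
  have e : t * q * a = t * a + (1 - t) * b.
    have -> : t * q * a = q * (t * a) by ring. by rewrite /q divfK // gt_eqF.
  rewrite -/a; have -> : t * dotp z1 v + (1 - t) * dotp z2 v - c = t * a + (1 - t) * b by rewrite /a /b; ring.
  rewrite -e; ring.
by apply: cH.
Qed.


Lemma fold_hull (O : set V) (v : V) c : dotp v v = 1 ->
  (forall x, O x -> c < dotp x v -> O (refl v c x)) ->
  forall z, convex_hull O z -> c < dotp z v -> convex_hull O (refl v c z).
Proof.
move=> vv hO z hz.
pose S := [set z | convex_hull O z /\ (c < dotp z v -> convex_hull O (refl v c z))].
have cS : is_convex_set S.
  move=> x y t [Hx rx] [Hy ry] t0 t1; split; first exact: hull_convex.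
  move=> cz.
  case: (ltP c (dotp x v)) => cx; case: (ltP c (dotp y v)) => cy.
  - by rewrite refl_comb; apply: hull_convex => //; [exact: (rx cx)|exact: (ry cy)].
  - by apply: (@key (convex_hull O) v c (@hull_convex O) vv) => //; exact: (rx cx).
  - have e : t *: x + (1 - t) *: y = (1 - t) *: y + (1 - (1 - t)) *: x.
      by rewrite subKr addrC.
    have a1 : 0 <= 1 - t by rewrite subr_ge0.
    have a2 : 1 - t <= 1 by rewrite gerBl.
    rewrite e; rewrite e in cz.
    by apply: (@key (convex_hull O) v c (@hull_convex O) vv) => //; exact: (ry cy).
  - move: cz; rewrite dotp_comb => cz; exfalso.
    have h1 : 0 <= t * (c - dotp x v) by apply: mulr_ge0 => //; rewrite subr_ge0.
    have t1' : 0 <= 1 - t by rewrite subr_ge0.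
    have cy' : 0 <= c - dotp y v by rewrite subr_ge0.
    have h2 := mulr_ge0 t1' cy'.
    nra.
have OS : O `<=` S.
  move=> x Ox; split; first exact: sub_hull.
  by move=> cx; apply: sub_hull; apply: hO.
by case: (hz S cS OS).
Qed.


Lemma bound_dotp (O : set V) (v : V) : compact O ->
  exists K, forall y, O y -> `|dotp y v| <= K.
Proof.
move=> cO; case: (compact_bounded cO) => M0 [_ HM].
have := HM (`|M0| + 1) _; rewrite /= => H.
have /H {}H : M0 < `|M0| + 1 by apply: (le_lt_trans (ler_norm _)); rewrite ltrDl.
exists ((`|M0| + 1) * \sum_(i < n) `|v 0 i|) => y Oy.
apply: (le_trans (dotp_bound _ _)); apply: ler_wpM2r; last exact: H.
by apply: sumr_ge0 => i _.
Qed.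


Lemma above_l (O : set V) (v : V) : compact O -> dotp v v = 1 ->
  forall c, lX O v < c -> forall y, O y -> c < dotp y v -> O (refl v c y).
Proof.
move=> cO vv c lc y Oy cy.
have [K HK] := @bound_dotp O v cO.
set A := [set a : R | forall c, a <= c -> refl v c @` halfplus O v c `<=` O].
have AK : A K.
  move=> c' Kc' _ [w [Ow cw] <-]; exfalso; move: cw => /= cw.
  have := HK w Ow; rewrite ler_norml => /andP[_ h]; lra.
have [a Aa ac] : exists2 a, A a & a < c.
  by apply: inf_lt => //; exists K.
by apply: (Aa c (ltW ac)); exists y.
Qed.


Lemma ge_l (O : set V) (v : V) : compact O -> dotp v v = 1 ->
  forall c, lX O v <= c -> forall y, O y -> c < dotp y v -> O (refl v c y).
Proof.
move=> cO vv c; rewrite le_eqVlt => /orP[/eqP lc|lc]; last exact: above_l.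
move=> y Oy cy; rewrite -lc in cy *.
set l := lX O v in cy *.
have clO : closed O by apply: compact_closed => //; exact: norm_hausdorff.
apply: clO => B /nbhs_ballP [e /= e0 hB].
set d := Num.min ((dotp y v - l) / 2) (e / (2 * (`|v| + 1))).
have nv : 0 <= `|v| by [].
have d0 : 0 < d.
  rewrite /d lt_min; apply/andP; split; first by rewrite divr_gt0 // subr_gt0.
  by rewrite divr_gt0 // mulr_gt0 // ltr_wpDl.
have d1 : d <= (dotp y v - l) / 2 by rewrite /d ge_min lexx.
have d2 : d <= e / (2 * (`|v| + 1)) by rewrite /d ge_min lexx orbT.
have d2' : d * (2 * (`|v| + 1)) <= e.
  by rewrite -ler_pdivlMr // mulr_gt0 // ltr_wpDl.
exists (refl v (l + d) y); split.
  apply: (@above_l O v cO vv) => //; first by rewrite ltrDl.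
  lra.
apply: hB; rewrite -ball_normE /ball_ /=.
have -> : refl v l y - refl v (l + d) y = (- (2 * d)) *: v.
  by apply/rowP => j; rewrite /refl !mxE; ring.
rewrite normrZ normrN gtr0_norm ?mulr_gt0 //.
nra.
Qed.

End Aux.

Theorem lemma2p2 (R : realType) (n : nat) (Omega : set 'rV[R]_n) (v : 'rV[R]_n) :
  (2 <= n)%N -> compact Omega -> unit_sphere v ->
  forall z, halfplus (convex_hull Omega) v (lX Omega v) z ->
    closed_segment z (refl v (lX Omega v) z) `<=` convex_hull Omega.
Proof.
move=> _ cO vv z [Hz zl] p [s s01 <-].
move: zl => /= zl.
move: s01; rewrite /= in_itv /= => /andP[s0 s1].
set l := lX Omega v in zl *.
have {}vv : dotp v v = 1 by exact: vv.
move: s0; rewrite le_eqVlt => /orP[/eqP s0|s0].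
  by rewrite -s0 subr0 scale1r scale0r addr0.
set c := dotp z v - s * (dotp z v - l).
have -> : (1 - s) *: z + s *: refl v l z = refl v c z.
  by apply/rowP => j; rewrite /refl /c !mxE; ring.
apply: (@fold_hull R n Omega v c vv) => //.
  by move=> x Ox cx; apply: (@ge_l R n Omega v cO vv) => //; rewrite /c; nra.
rewrite /c; nra.
Qed.
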